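(* Let $n\ge4$ be even, $p\ge n+1$ an integer, $c_1$ a positive integer, $a_k=pc_k$, $c_{k+1}=p^2c_k$, and let $T$, $I^{(k)}_i$ and $\lambda_i$ be as in the context. Then for every odd $i$ with $3\le i\le n-1$, every $k\ge1$ and every integer $j$ with $1\le j\le n/2-1$ and $j\ne\frac{i-1}{2}$, $$\lambda_i(I^{(k)}_{2j})>\lambda_i(I^{(k)}_{2j+1}).$$
   Context: $\pi$ is the permutation of $\{1,\dots,n\}$ with top row $1,2,\dots,n$ and bottom row $n,3,2,5,4,\dots,n-1,n-2,1$. Right Rauzy induction: step ''0'' when the rightmost domain (top) interval is longer, ''1'' when the rightmost image (bottom) interval is longer. For $a,c>0$, $\dot\gamma_{m,a}=1^{n-1-m}0^a10^2$, $\gamma_{a,c}=0\,\dot\gamma_{n-2,a}\cdots\dot\gamma_{2,a}\,1^{c(n-1)}$; its transition matrix $\Theta_{a,c}$ (old lengths $=\Theta_{a,c}\cdot$new lengths) has row $1=(1,c,\dots,c)$, row $n=(1,c+1,\dots,c+1)$, and for $1\le i\le(n-2)/2$: row $2i$ has $0$ in column 1, $2$ in columns $2i,2i+1$, $1$ in the other columns among $2,\dots,n$; row $2i+1$ has $a$ in column $2i$, $a+1$ in column $2i+1$, $0$ elsewhere. $\Theta_k=\Theta_{a_k,c_k}$. $T$ is an IET of $[0,1)$ with permutation $\pi$ whose right Rauzy induction path is $\gamma_{a_1,c_1}\gamma_{a_2,c_2}\cdots$; $I^{(k)}$ is the interval on which the induced map lives after the first $k$ blocks and $I^{(k)}_1,\dots,I^{(k)}_n$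 its exchanged subintervals; lengths satisfy $\ell^{(k-1)}=\Theta_k\ell^{(k)}$. For $v\ge0$, $|v|$ is the sum of entries and $\overline v=v/|v|$. $\lambda_i$ denotes the $T$-invariant Borel probability measure such that for every $k\ge0$, $(\lambda_i(I^{(k)}_t))_t$ is a positive multiple of $\lim_{m\to\infty}\overline{\Theta_{k+1}\cdots\Theta_me_i}$. *)

(* Defs.v *)
From HB Require Import structures.
From mathcomp Require Import all_boot all_order all_algebra.
From mathcomp Require Import all_classical all_reals all_analysis.
Import Order.TTheory GRing.Theory Num.Theory.
Import numFieldNormedType.Exports.

Set Implicit Arguments.
Unset Strict Implicit.
Unset Printing Implicit Defensive.

Local Open Scope classical_set_scope.
Local Open Scope ring_scope.

(* Letters (interval labels) are the natural numbers 1..n.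
   A (labelled) IET state is (top row, bottom row, lengths). *)
Definition iet_state (R : realType) := (seq nat * seq nat * (nat -> R))%type.

(* The permutation pi: top row 1,...,n ; bottom row n,3,2,5,4,...,n-1,n-2,1. *)
Definition pi_top (n : nat) : seq nat := iota 1 n.
Definition pi_bot (n : nat) : seq nat :=
  n :: flatten [seq [:: (2 * q).+1; 2 * q] | q <- iota 1 (n./2 - 1)] ++ [:: 1%N].

(* Words in {0,1}: false = "0", true = "1". *)
Definition gdot (n m a : nat) : seq bool :=
  nseq (n - 1 - m) true ++ nseq a false ++ [:: true; false; false].

Definition gamma (n a c : nat) : seq bool :=
  false :: flatten [seq gdot n (n - 2 * q) a | q <- iota 1 (n./2 - 1)]
        ++ nseq (c * (n - 1)) true.

Definition insert_after (x y : nat) (s : seq nat) : seq nat :=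
  take (index x s).+1 s ++ y :: drop (index x s).+1 s.

Definition drop_last (s : seq nat) : seq nat := take (size s).-1 s.

(* One step of right Rauzy induction, required to be of type b
   (b = false: "0", the last top interval is strictly longer;
    b = true : "1", the last bottom interval is strictly longer). *)
Definition rauzy_step (R : realType) (b : bool) (st : iet_state R)
  : option (iet_state R) :=
  let: (top, bot, len) := st in
  let al := last 0%N top in
  let be := last 0%N bot in
  if ~~ b then
    (if len be < len al then
       Some (top, insert_after al be (drop_last bot),
             fun u => if u == al then len al - len be else len u)
     else None)
  else
    (if len al < len be then
       Some (insert_after be al (drop_last top), bot,
             fun u => if u == be then len be - len al else len u)
     else None).

Fixpoint rauzy_run (R : realType) (w : seq bool) (st : iet_state R)
  : option (iet_state R) :=
  match w with
  | [::] => Some st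
  | b :: w' => obind (rauzy_run w') (rauzy_step b st)
  end.

Definition lpos (R : realType) (s : seq nat) (len : nat -> R) (t : nat) : R :=
  \sum_(u <- take (index t s) s) len u.

Definition subint (R : realType) (st : iet_state R) (t : nat) : set R :=
  let: (top, _, len) := st in
  [set x | lpos top len t <= x /\ x < lpos top len t + len t].

(* The interval exchange map of a state, extended by the identity outside
   the union of the intervals. *)
Definition iet_map (R : realType) (st : iet_state R) (x : R) : R :=
  let: (top, bot, len) := st in
  let P := fun u => (lpos top len u <= x) && (x < lpos top len u + len u) in
  let k := find P top in
  if (k < size top)%N then
    let t := nth 0%N top k in x - lpos top len t + lpos bot len t
  else x.

(* The transition matrix Theta_{a,c} (rows/columns indexed by 1..n). *)
Definition Theta (R : realType) (n a c : nat) (r s : nat) : R :=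
  if r == 1%N then (if s == 1%N then 1 else c%:R)
  else if r == n then (if s == 1%N then 1 else c.+1%:R)
  else if ~~ odd r then
    (if s == 1%N then 0 else if (s == r) || (s == r.+1) then 2 else 1)
  else (if s == r.-1 then a%:R else if s == r then a.+1%:R else 0).

Definition mulv (R : realType) (n : nat) (M : nat -> nat -> R) (v : nat -> R)
  : nat -> R := fun r => \sum_(1 <= s < n.+1) M r s * v s.

(* thprod n th k d v = th (k+1) * th (k+2) * ... * th (k+d) * v *)
Fixpoint thprod (R : realType) (n : nat) (th : nat -> nat -> nat -> R)
  (k d : nat) (v : nat -> R) : nat -> R :=
  match d with
  | 0%N => v
  | d'.+1 => mulv n (th k.+1) (thprod n th k.+1 d' v)
  end.

Definition evec (R : realType) (i : nat) : nat -> R :=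
  fun s => if s == i then 1 else 0.

Definition vsum (R : realType) (n : nat) (v : nat -> R) : R :=
  \sum_(1 <= s < n.+1) v s.
Definition vnorm (R : realType) (n : nat) (v : nat -> R) : nat -> R :=
  fun s => v s / vsum n v.

(* Main.v *)
Require Import Defs.
From HB Require Import structures.
From mathcomp Require Import all_boot all_order all_algebra.
From mathcomp Require Import all_classical all_reals all_analysis.
Import Order.TTheory GRing.Theory Num.Theory.
Import numFieldNormedType.Exports.
Local Open Scope classical_set_scope.
Local Open Scope ring_scope.
From mathcomp Require Import lra zify.


Lemma sum_delta (R : realType) (F : nat -> R) (m N r : nat) :
  (m <= r < N)%N -> \sum_(m <= s < N) (if s == r then F s else 0) = F r.
Proof.
move=> /andP[h1 h2].
rewrite (big_cat_nat h1 (ltnW h2)) //=. rewrite [X in _ + X]big_ltn //= eqxx.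
rewrite big1_seq; last first.
  move=> s /andP[_]; rewrite mem_index_iota => /andP[_ hs].
  by rewrite (ltn_eqF hs).
rewrite big1_seq ?addr0 ?add0r //.
move=> s /andP[_]; rewrite mem_index_iota => /andP[hs _].
by rewrite (gtn_eqF hs).
Qed.

Lemma sum_pairs (R : realType) (x : nat -> R) (h : nat) :
  \sum_(2 <= s < (2 * h+2).+1) x s =
  x (2 * h+2)%N + \sum_(1 <= l < h.+1) (x (2 * l)%N + x (2 * l).+1).
Proof.
elim: h => [|h IH].
  have -> : (2 * 0 + 2 = 2)%N by [].
  by rewrite big_nat1 big_geq // addr0.
have -> : (2 * h.+1 + 2 = (2 * h + 2).+2)%N by lia.
rewrite big_nat_recr /=; last by lia.
rewrite big_nat_recr /=; last by lia.
rewrite [in RHS]big_nat_recr //=.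
have -> : (2 * h.+1 = 2 * h + 2)%N by lia.
move: IH. set A := \sum_(2 <= i < _) _. set B := \sum_(1 <= l < h.+1) _. move=> IH.
rewrite IH. lra.
Qed.

Definition XX {R : realType} (n : nat) (x : nat -> R) := \sum_(2 <= s < n.+1) x s.

Lemma row1 (R : realType) (n a c : nat) (x : nat -> R) : (1 < n)%N ->
  mulv n (Theta R n a c) x 1%N = x 1%N + c%:R * XX n x.
Proof.
move=> hn; rewrite /mulv big_ltn ?ltnS ?(ltnW hn) //.
rewrite /Theta eqxx mul1r /XX mulr_sumr; congr (_ + _).
apply: eq_big_nat => s /andP[hs _].
by rewrite (gtn_eqF hs).
Qed.

Lemma rown (R : realType) (n a c : nat) (x : nat -> R) : (1 < n)%N ->
  mulv n (Theta R n a c) x n = x 1%N + c.+1%:R * XX n x.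
Proof.
move=> hn; rewrite /mulv big_ltn ?ltnS ?(ltnW hn) //.
rewrite /Theta eqxx (gtn_eqF hn) eqxx mul1r /XX mulr_sumr; congr (_ + _).
apply: eq_big_nat => s /andP[hs _].
by rewrite (gtn_eqF hs).
Qed.

Lemma roweven (R : realType) (n a c l : nat) (x : nat -> R) :
  (1 <= l)%N -> (2 * l < n)%N ->
  mulv n (Theta R n a c) x (2 * l)%N = XX n x + x (2 * l)%N + x (2 * l).+1.
Proof.
move=> hl hn; rewrite /mulv big_ltn; last lia.
have e1 : ((2 * l)%N == 1%N) = false by apply/eqP; lia.
have e2 : ((2 * l)%N == n) = false by apply/eqP; lia.
rewrite /Theta e1 e2 (_ : odd (2 * l) = false) /= ?mul0r ?add0r; last by rewrite mul2n odd_double.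
rewrite /XX.
rewrite (eq_big_nat _ _ (F2 := fun s => x s + ((if s == (2 * l)%N then x s else 0)
   + (if s == (2 * l).+1 then x s else 0)))); last first.
  move=> s /andP[hs _]; rewrite (gtn_eqF hs).
  case: eqP => [->|h1]; first by rewrite /= (ltn_eqF (ltnSn _)) /=; lra.
  case: eqP => [->|h2] /=; lra.
rewrite big_split /= big_split /= !sum_delta; try lia.
by rewrite addrA.
Qed.

Lemma rowodd (R : realType) (n a c l : nat) (x : nat -> R) :
  (1 <= l)%N -> ((2 * l).+1 < n)%N ->
  mulv n (Theta R n a c) x (2 * l).+1 = a%:R * x (2 * l)%N + a.+1%:R * x (2 * l).+1.
Proof.
move=> hl hn; rewrite /mulv.
have e1 : ((2 * l).+1 == 1%N) = false by apply/eqP; lia.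
have e2 : ((2 * l).+1 == n) = false by apply/eqP; lia.
rewrite /Theta e1 e2 /= (_ : odd (2 * l) = false) /=; last by rewrite mul2n odd_double.
rewrite (eq_big_nat _ _ (F2 := fun s => ((if s == (2 * l)%N then a%:R * x s else 0)
   + (if s == (2 * l).+1 then a.+1%:R * x s else 0)))); last first.
  move=> s _.
  case: eqP => [->|h1]; first by rewrite /= (ltn_eqF (ltnSn _)) /=; lra.
  case: eqP => [->|h2] /=; lra.
rewrite big_split /= !sum_delta //; lia.
Qed.

Lemma Ysum (R : realType) (h a c : nat) (x : nat -> R) : (1 <= h)%N ->
  XX (2 * h + 2) (mulv (2 * h + 2) (Theta R (2 * h + 2) a c) x) =
  mulv (2 * h + 2) (Theta R (2 * h + 2) a c) x (2 * h + 2)%N +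
  \sum_(1 <= l < h.+1) (XX (2 * h + 2) x + a.+1%:R * (x (2 * l)%N + x (2 * l).+1)
                        + x (2 * l).+1).
Proof.
move=> hh; rewrite {1}/XX sum_pairs; congr (_ + _).
apply: eq_big_nat => l /andP[hl1 hl2].
rewrite roweven ?rowodd //; try lia.
rewrite mulrS; lra.
Qed.

Lemma case_idx (h s : nat) : (1 <= s <= 2 * h + 2)%N ->
  s = 1%N \/ s = (2 * h + 2)%N \/
  exists l, (1 <= l <= h)%N /\ (s = (2 * l)%N \/ s = (2 * l).+1).
Proof.
move=> hs.
have e := odd_double_half s.
case: (ltnP s 2) => [hs2|hs2]; first by left; lia.
case: (ltnP s (2 * h + 2)) => [hs3|hs3]; last by right; left; lia.
right; right; exists s./2; split; first lia.
move: e; case: (odd s) => /= e; [right|left]; lia.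
Qed.

Ltac clia := repeat match goal with H : ?T |- _ =>
  lazymatch T with is_true (_ <= _)%N => fail | _ => clear H end end; lia.

Definition Invt {R : realType} (h j0 : nat) (A : R) (x : nat -> R) : Prop :=
  (forall s, (1 <= s <= 2 * h + 2)%N -> 0 <= x s) /\
  0 < XX (2 * h + 2) x /\ x 1%N <= XX (2 * h + 2) x /\
  2 * x (2 * h + 2)%N <= XX (2 * h + 2) x /\
  (forall l, (1 <= l <= h)%N -> l != j0 ->
     A * (x (2 * l)%N + x (2 * l).+1) <= 4 * XX (2 * h + 2) x).

Lemma XX_ge (R : realType) (h : nat) (x : nat -> R) :
  (forall s, (1 <= s <= 2 * h + 2)%N -> 0 <= x s) ->
  XX (2 * h + 2) x = x (2 * h + 2)%N + \sum_(1 <= l < h.+1) (x (2 * l)%N + x (2 * l).+1).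
Proof. by move=> _; rewrite /XX sum_pairs. Qed.

Lemma step (R : realType) (h j0 p c : nat) (x : nat -> R) :
  (1 <= h)%N -> (5 <= p)%N -> (1 <= c)%N ->
  Invt h j0 ((p ^ 2 * (p * c))%:R) x ->
  Invt h j0 ((p * c)%:R) (mulv (2 * h + 2) (Theta R (2 * h + 2) (p * c) c) x).
Proof.
move=> hh hp hc [hnn [hX [h1 [hN hP]]]].
set y := mulv (2 * h + 2) _ x.
set X := XX (2 * h + 2) x in hX h1 hN hP *.
have ec : (c.+1)%:R = c%:R + 1 :> R by rewrite mulrS addrC.
have ea : ((p * c).+1)%:R = (p * c)%:R + 1 :> R by rewrite mulrS addrC.
have hN1 : (1 < 2 * h + 2)%N by clia.
have y1 : y 1%N = x 1%N + c%:R * X by rewrite /y row1.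
have yN : y (2 * h + 2)%N = x 1%N + c%:R * X + X by rewrite /y rown // ec /X; lra.
have cge1 : 1 <= c%:R :> R by rewrite ler1n.
have pge5 : 5 <= p%:R :> R by rewrite (ler_nat R 5 p).
set a := (p * c)%:R : R.
have age : 5 * c%:R <= a by rewrite /a natrM ler_wpM2r // ler0n.
have x1ge : 0 <= x 1%N by apply: hnn; clia.
have xNge : 0 <= x (2 * h + 2)%N by apply: hnn; clia.
have Psum : X = x (2 * h + 2)%N + \sum_(1 <= l < h.+1) (x (2 * l)%N + x (2 * l).+1) by rewrite /X XX_ge.
have Ys := Ysum R h (p * c) c x hh.
rewrite -/y -/X ea -/a in Ys.
set Q := \sum_(1 <= l < h.+1) _ in Ys.
set Ps := \sum_(1 <= l < h.+1) _ in Psum.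
have QP : (a + 1) * Ps <= Q.
  rewrite /Q /Ps mulr_sumr; apply: ler_sum_nat => l /andP[hl1 hl2].
  have : 0 <= x (2 * l).+1 by apply: hnn; clia.
  have : 0 < X by [].
  lra.
have Y_lb : XX (2 * h + 2) y >= x 1%N + c%:R * X + X + (a + 1) * (X - x (2 * h + 2)%N) by rewrite Ys yN; rewrite Psum; lra.
have XmxN : X <= 2 * (X - x (2 * h + 2)%N) by lra.
have aXpos : 0 <= (a - 2 * c%:R - 3) * X.
  by apply: mulr_ge0; lra.
split.
  move=> s /case_idx [->|[->|[l [/andP[hl1 hl2] [->|->]]]]].
  - rewrite y1; have := mulr_ge0 (ler0n R c) (ltW hX); lra.
  - rewrite yN; have := mulr_ge0 (ler0n R c) (ltW hX); lra.
  - rewrite /y (roweven _ _ _ _ l); [|clia|clia].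
    have : 0 <= x (2 * l)%N by apply: hnn; clia.
    have : 0 <= x (2 * l).+1 by apply: hnn; clia.
    rewrite -/X.
    lra.
  - rewrite /y (rowodd _ _ _ _ l); [|clia|clia].
    have : 0 <= x (2 * l)%N by apply: hnn; clia.
    have : 0 <= x (2 * l).+1 by apply: hnn; clia.
    move=> v u.
    have := mulr_ge0 (ler0n R (p * c)) u.
    have := mulr_ge0 (ler0n R (p * c).+1) v.
    lra.
have cX : 0 <= c%:R * X by apply: mulr_ge0; [exact: ler0n | exact: ltW].
have aX : 0 <= (a + 1) * (X - x (2 * h + 2)%N) by apply: mulr_ge0; lra.
split; first lra.
split; first by rewrite y1; lra.
split.
  rewrite yN.
  have : (a + 1) * (X - x (2 * h + 2)%N) >= (a + 1) * X / 2.
    rewrite -mulrA; apply: ler_wpM2l; lra.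
  move=> H; lra.
move=> l /andP[hl1 hl2] hl.
rewrite /y (roweven _ _ _ _ l) ?(rowodd _ _ _ _ l); try clia.
rewrite -/y -/X ea -/a.
have H := hP l (introT andP (conj hl1 hl2)) hl.
set P := x (2 * l)%N + x (2 * l).+1 in H *.
have e0 : 0 <= x (2 * l)%N by apply: hnn; clia.
have e1 : 0 <= x (2 * l).+1 by apply: hnn; clia.
have Pge : 0 <= P by rewrite /P; lra.
have hp2 : 25 <= (p ^ 2)%:R :> R.
  have hp2n : (25 <= p ^ 2)%N by clear -hp; rewrite expnS expn1; nia.
  by rewrite (ler_nat R 25).
rewrite natrM -/a in H.
have H1 : 25 * (a * P) <= 4 * X.
  apply: le_trans H; rewrite -mulrA; apply: ler_wpM2r => //.
  by apply: mulr_ge0; [lra|].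
have H2 : a * (25 * (a * P)) <= a * (4 * X) by apply: ler_wpM2l; lra.
have ax : 0 <= a * x (2 * l).+1 by apply: mulr_ge0; lra.
have aP : a * x (2 * l).+1 <= a * P by apply: ler_wpM2l; rewrite /P; lra.
have : (a + 1) * (X - x (2 * h + 2)%N) >= (a + 1) * X / 2.
  rewrite -mulrA; apply: ler_wpM2l; lra.
move=> H3.
have Hx := mulr_ge0 (ler0n R c) (ltW hX).
rewrite /P in H1 H2 aP Pge.
lra.
Qed.

Lemma inv_base (R : realType) (h j0 : nat) (A : R) :
  (1 <= j0 <= h)%N -> Invt h j0 A (evec R (2 * j0).+1).
Proof.
move=> hj.
have eX : XX (2 * h + 2) (evec R (2 * j0).+1) = 1.
  rewrite /XX /evec.
  apply: (sum_delta R (fun _ => (1 : R)) 2 (2 * h + 2).+1 (2 * j0).+1).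
  by clear -hj; lia.
split.
  by move=> s _; rewrite /evec; case: eqP.
rewrite eX; split; first lra.
split; first by rewrite /evec (_ : (1 == (2 * j0).+1)%N = false) //; apply/eqP; clear -hj; lia.
split; first by rewrite /evec (_ : ((2 * h + 2)%N == (2 * j0).+1)%N = false) ?mulr0 //; apply/eqP; clear -hj; lia.
move=> l hl hl0.
rewrite /evec (_ : ((2 * l)%N == (2 * j0).+1)%N = false); last by apply/eqP; clear -hl; lia.
rewrite (_ : ((2 * l).+1 == (2 * j0).+1)%N = false); last first.
  by apply/eqP => e; move/eqP: hl0; apply; clear -e; lia.
rewrite addr0 mulr0; lra.
Qed.

Lemma inv_thprod (R : realType) (h j0 p : nat) (a c : nat -> nat) :
  (1 <= h)%N -> (5 <= p)%N -> (1 <= j0 <= h)%N ->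
  (forall q, (1 <= q)%N -> (1 <= c q)%N) ->
  (forall q, (1 <= q)%N -> c q.+1 = (p ^ 2 * c q)%N) ->
  (forall q, (1 <= q)%N -> a q = (p * c q)%N) ->
  forall d k, Invt h j0 (a k.+1)%:R
    (thprod (2 * h + 2) (fun q => Theta R (2 * h + 2) (a q) (c q)) k d
       (evec R (2 * j0).+1)).
Proof.
move=> hh hp hj hc hcS ha; elim=> [|d IH] k /=.
  exact: inv_base.
rewrite ha //.
have := IH k.+1.
rewrite ha // hcS // (_ : (p * (p ^ 2 * c k.+1) = p ^ 2 * (p * c k.+1))%N); last first.
  by rewrite mulnCA.
move=> H; apply: step => //; exact: hc.
Qed.

Lemma final_bound (R : realType) (h j0 j p c : nat) (w : nat -> R) :
  (1 <= h)%N -> (5 <= p)%N -> (1 <= c)%N -> (1 <= j <= h)%N -> j != j0 ->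
  Invt h j0 ((p ^ 2 * (p * c))%:R) w ->
  0 < vsum (2 * h + 2) (mulv (2 * h + 2) (Theta R (2 * h + 2) (p * c) c) w) /\
  vsum (2 * h + 2) (mulv (2 * h + 2) (Theta R (2 * h + 2) (p * c) c) w) <=
  2 * (2 * c + h + p * c + 5)%:R *
   (mulv (2 * h + 2) (Theta R (2 * h + 2) (p * c) c) w (2 * j)%N -
    mulv (2 * h + 2) (Theta R (2 * h + 2) (p * c) c) w (2 * j).+1).
Proof.
move=> hh hp hc hj hj0 [hnn [hX [h1 [hN hP]]]].
set u := mulv (2 * h + 2) _ w.
set W := XX (2 * h + 2) w in hX h1 hN hP *.
have hN1 : (1 < 2 * h + 2)%N by clear -hh; lia.
have ec : (c.+1)%:R = c%:R + 1 :> R by rewrite mulrS addrC.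
have ea : ((p * c).+1)%:R = (p * c)%:R + 1 :> R by rewrite mulrS addrC.
have eB : (2 * c + h + p * c + 5)%:R = 2 * c%:R + h%:R + (p * c)%:R + 5 :> R.
  rewrite !natrD; lra.
rewrite eB.
have u1 : u 1%N = w 1%N + c%:R * W.
  by rewrite /u row1.
have uN : u (2 * h + 2)%N = w 1%N + c%:R * W + W by rewrite /u rown // ec /W; lra.
have hcR : 1 <= c%:R :> R by rewrite ler1n.
have hR : 0 <= h%:R :> R by exact: ler0n.
set a := (p * c)%:R : R.
have a0 : 0 <= a by exact: ler0n.
have w1ge : 0 <= w 1%N by apply: hnn; clear -hh; lia.
have wNge : 0 <= w (2 * h + 2)%N by apply: hnn; clear -hh; lia.
have Psum : W = w (2 * h + 2)%N + \sum_(1 <= l < h.+1) (w (2 * l)%N + w (2 * l).+1) by rewrite /W XX_ge.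
have Ys := Ysum R h (p * c) c w hh.
rewrite -/u -/W ea -/a in Ys.
set Q := \sum_(1 <= l < h.+1) _ in Ys.
set Ps := \sum_(1 <= l < h.+1) _ in Psum.
have QP : Q <= h%:R * W + (a + 2) * Ps.
  have -> : h%:R * W + (a + 2) * Ps = \sum_(1 <= l < h.+1) (W + (a + 2) * (w (2 * l)%N + w (2 * l).+1)).
    rewrite big_split /= sumr_const_nat subn1 /= -mulr_sumr /Ps.
    by rewrite mulr_natl.
  rewrite /Q; apply: ler_sum_nat => l /andP[hl1 hl2].
  have : 0 <= w (2 * l)%N by apply: hnn; clear -hl1 hl2; lia.
  lra.
have Psge : 0 <= Ps by lra.
have aPs : (a + 2) * Ps <= (a + 2) * W by apply: ler_wpM2l; lra.
have vs : vsum (2 * h + 2) u = u 1%N + XX (2 * h + 2) u.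
  rewrite /vsum big_ltn; [done| clear -hh; lia].
have cW : 0 <= c%:R * W by apply: mulr_ge0; lra.
have hW : 0 <= h%:R * W by apply: mulr_ge0; lra.
have Qge : 0 <= Q.
  apply: le_trans (_ : \sum_(1 <= l < h.+1) (0:R) <= Q); first by rewrite big1_eq.
  rewrite /Q; apply: ler_sum_nat => l /andP[hl1 hl2].
  have : 0 <= w (2 * l)%N by apply: hnn; clear -hl1 hl2; lia.
  have : 0 <= w (2 * l).+1 by apply: hnn; clear -hl1 hl2; lia.
  move=> e1 e2.
  have := mulr_ge0 (addr_ge0 a0 ler01) (addr_ge0 e2 e1).
  lra.
split.
  rewrite vs Ys uN u1; lra.
case/andP: hj => hj1 hj2.
rewrite /u (roweven _ _ _ _ j) ?(rowodd _ _ _ _ j); try (clear -hj1 hj2; lia).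
rewrite -/u -/W ea -/a.
have H := hP j (introT andP (conj hj1 hj2)) hj0.
have e0 : 0 <= w (2 * j)%N by apply: hnn; clear -hj1 hj2; lia.
have e1 : 0 <= w (2 * j).+1 by apply: hnn; clear -hj1 hj2; lia.
have hp2 : 25 <= (p ^ 2)%:R :> R.
  have hp2n : (25 <= p ^ 2)%N by clear -hp; rewrite expnS expn1; nia.
  by rewrite (ler_nat R 25).
rewrite natrM -/a in H.
have H1 : 25 * (a * (w (2 * j)%N + w (2 * j).+1)) <= 4 * W.
  apply: le_trans H; rewrite -mulrA; apply: ler_wpM2r => //.
  by apply: mulr_ge0; lra.
have ax : 0 <= a * w (2 * j).+1 by apply: mulr_ge0; lra.
have D : W / 2 <= W + w (2 * j)%N + w (2 * j).+1 - (a * w (2 * j)%N + (a + 1) * w (2 * j).+1).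
  lra.
have B0 : 0 <= 2 * c%:R + h%:R + a + 5 by lra.
have := ler_wpM2l B0 D.
have aW : 0 <= a * W by apply: mulr_ge0; lra.
rewrite vs Ys uN u1.
move=> HD.
lra.
Qed.

Theorem mainTheorem9 (R : realType) (n p c1 : nat) (a c : nat -> nat)
  (len0 : nat -> R) (S : nat -> iet_state R) :
  (4 <= n)%N -> ~~ odd n -> (n.+1 <= p)%N -> (0 < c1)%N ->
  c 1%N = c1 ->
  (forall k, (1 <= k)%N -> c k.+1 = (p ^ 2 * c k)%N) ->
  (forall k, (1 <= k)%N -> a k = (p * c k)%N) ->
  (* T: IET of [0,1) with permutation pi and lengths len0 *)
  (forall t, (1 <= t <= n)%N -> 0 < len0 t) ->
  \sum_(1 <= t < n.+1) len0 t = 1 ->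
  S 0%N = (pi_top n, pi_bot n, len0) ->
  (* right Rauzy induction path is gamma_{a_1,c_1} gamma_{a_2,c_2} ...;
     S k is the induced IET after the first k blocks *)
  (forall k, rauzy_run (gamma n (a k.+1) (c k.+1)) (S k) = Some (S k.+1)) ->
  forall i : nat, odd i -> (3 <= i <= n - 1)%N ->
  forall P : probability R R,
  P [set x : R | 0 <= x /\ x < 1] = 1%E ->
  (forall A : set R, measurable A ->
     P (iet_map (S 0%N) @^-1` A) = P A) ->
  (forall k : nat, exists v : nat -> R, exists r : R, 0 < r /\
     (forall t, (1 <= t <= n)%N ->
        (fun m => vnorm n (thprod n (fun q => Theta R n (a q) (c q)) k m
                                 (evec R i)) t) @ \oo --> v t) /\
     (forall t, (1 <= t <= n)%N -> P (subint (S k) t) = (r * v t)%:E)) ->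
  forall k j : nat, (1 <= k)%N -> (1 <= j <= n./2 - 1)%N -> j != i./2 ->
  (P (subint (S k) (2 * j)%N) > P (subint (S k) (2 * j).+1))%E.
Proof.
move=> hn4 hnodd hp hc1 ec1 hcS ha _ _ _ _ i hi hi3 P _ _ hlam k j hk hj hjne.
have [h [eh hh]] : exists h, n = (2 * h + 2)%N /\ (1 <= h)%N.
  move: (odd_double_half n); rewrite (negbTE hnodd) add0n -mul2n => e.
  exists (n./2 - 1)%N; clear -e hn4; lia.
subst n.
have e2 : ((2 * h + 2)./2 = h.+1)%N.
  by rewrite (_ : (2 * h + 2 = (h.+1).*2)%N) ?doubleK // -mul2n; lia.
rewrite e2 in hj.
have hj' : (1 <= j <= h)%N by clear -hj; lia.
move: (odd_double_half i); rewrite hi -mul2n /= => ei.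
set j0 := i./2 in ei hjne.
have hj0 : (1 <= j0 <= h)%N by clear -ei hi3; lia.
have ei' : i = (2 * j0).+1 by clear -ei; lia.
have hp5 : (5 <= p)%N by clear -hp hh; lia.
have hcpos : forall q, (1 <= q)%N -> (1 <= c q)%N.
  elim=> [//|q IH] _.
  case: q IH => [|q] IH; first by rewrite ec1.
  rewrite hcS //; have := IH isT; clear -hp5; nia.
have [v [r [hr [hconv hPm]]]] := hlam k.
rewrite (hPm (2 * j)%N) ?(hPm (2 * j).+1); try (clear -hj'; lia).
rewrite lte_fin.
suff : v (2 * j).+1 < v (2 * j)%N by move=> H; rewrite ltr_pM2l.
set th := fun q => Theta R (2 * h + 2) (a q) (c q).
set f := fun m => thprod (2 * h + 2) th k m (evec R i).
set B := (2 * c k.+1 + h + p * c k.+1 + 5)%:R : R.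
have B0 : 0 < B by rewrite /B ltr0n; clear; lia.
have ev : \forall m \near \oo,
   (2 * B)^-1 <= vnorm (2 * h + 2) (f m) (2 * j)%N - vnorm (2 * h + 2) (f m) (2 * j).+1.
  exists 1%N => // m /= hm.
  case: m hm => // m _.
  rewrite /f /= /th ha //.
  have := inv_thprod R h j0 p a c hh hp5 hj0 hcpos hcS ha m k.+1.
  rewrite ha // hcS // (_ : (p * (p ^ 2 * c k.+1) = p ^ 2 * (p * c k.+1))%N); last by rewrite mulnCA.
  rewrite -ei' => hinv.
  have [vs0 vsle] := final_bound _ _ _ _ _ _ _ hh hp5 (hcpos k.+1 isT) hj' hjne hinv.
  rewrite /vnorm -mulrBl ler_pdivlMr // mulrC ler_pdivrMr; last by rewrite mulr_gt0.
  rewrite -/B in vsle; lra.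
have L : (fun m => vnorm (2 * h + 2) (f m) (2 * j)%N - vnorm (2 * h + 2) (f m) (2 * j).+1)
    @ \oo --> v (2 * j)%N - v (2 * j).+1.
  apply: cvgB; [apply: (hconv (2 * j)%N) | apply: (hconv (2 * j).+1)]; clear -hj'; lia.
have := limr_ge (cvgP _ L) ev.
rewrite (cvg_lim _ L) //.
move=> /(_ _) H.
have : 0 < (2 * B)^-1 by rewrite invr_gt0 mulr_gt0.
lra.
Qed.
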